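(* Let $t$ be an indeterminate and let $\rho''_S: VSB_2\to GL_2(\mathbb{Z}[t^{\pm1}])$ be a representation extending the standard representation of $B_2$, i.e. $\rho''_S(\sigma_1)=\begin{pmatrix}0&t\\1&0\end{pmatrix}$. Then $\rho''_S(\tau_1)=\begin{pmatrix}a&ct\\c&a\end{pmatrix}$ for some $a,c\in\mathbb{Z}[t^{\pm1}]$, and $\rho''_S(\nu_1)$ is one of the following: (1) $\begin{pmatrix}p&q\\ \frac{1-p^2}{q}&-p\end{pmatrix}$ with $p,q\in\mathbb{Z}[t^{\pm1}]$; (2) $\begin{pmatrix}-1&0\\ r&1\end{pmatrix}$ with $r\in\mathbb{Z}[t^{\pm1}]$; (3) $\begin{pmatrix}1&0\\ r&-1\end{pmatrix}$ with $r\in\mathbb{Z}[t^{\pm1}]$; (4) $\begin{pmatrix}-1&0\\ 0&-1\end{pmatrix}$; (5) $\begin{pmatrix}1&0\\ 0&1\end{pmatrix}$.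
   Context: The virtual singular braid group $VSB_2$ is the group generated by $\sigma_1,\tau_1,\nu_1$ subject to the relations $\sigma_1\tau_1=\tau_1\sigma_1$ and $\nu_1^2=1$. It contains the braid group $B_2=\langle\sigma_1\rangle$ and the singular braid group $SB_2=\langle\sigma_1,\tau_1\mid \sigma_1\tau_1=\tau_1\sigma_1\rangle$. The standard representation of $B_2$ sends $\sigma_1$ to $\begin{pmatrix}0&t\\1&0\end{pmatrix}$. In case (1), $q$ is nonzero and the entry $\frac{1-p^2}{q}$ lies in $\mathbb{Z}[t^{\pm1}]$. *)

(* Defs.v *)
From HB Require Import structures.
From mathcomp Require Import all_boot all_order all_algebra.
From mathcomp Require Import fraction.
Set Implicit Arguments. Unset Strict Implicit. Unset Printing Implicit Defensive.
Import Order.TTheory GRing.Theory Num.Theory.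
Local Open Scope ring_scope.

(* Ambient field: rational functions Q(t) realised as {fraction {poly int}};
   the ring Z[t, t^-1] is the subring of elements p / t^n, p in Z[t]. *)
Notation QT := {fraction {poly int}}.

Definition tL : QT := tofrac ('X : {poly int}).

Definition laurent (x : QT) : Prop :=
  exists (n : nat) (p : {poly int}), x = tofrac p / tL ^+ n.

Definition mx_laurent (A : 'M[QT]_2) : Prop := forall i j, laurent (A i j).

Definition GL2L (A : 'M[QT]_2) : Prop :=
  mx_laurent A /\
  exists B : 'M[QT]_2, mx_laurent B /\ A *m B = 1%:M /\ B *m A = 1%:M.

Definition mx2 (a b c d : QT) : 'M[QT]_2 :=
  \matrix_(i < 2, j < 2)
    if (i == 0 :> nat) then (if (j == 0 :> nat) then a else b)
    else (if (j == 0 :> nat) then c else d).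

(* A representation VSB_2 -> GL_2(Z[t^{+-1}]) is determined by the images
   S, T, N of sigma_1, tau_1, nu_1, which must lie in GL_2(Z[t^{+-1}])
   and satisfy the defining relations S T = T S and N^2 = 1. *)
Definition VSB2_rep (S T N : 'M[QT]_2) : Prop :=
  [/\ GL2L S, GL2L T, GL2L N, S *m T = T *m S & N *m N = 1%:M].

(* Main.v *)
Require Import Defs.
From HB Require Import structures.
From mathcomp Require Import all_boot all_order all_algebra.
From mathcomp Require Import fraction.
Import Order.TTheory GRing.Theory Num.Theory.
Local Open Scope ring_scope.

Lemma ord2_cases (i : 'I_2) : i = 0 \/ i = 1.
Proof.
case: i => [[|[|k]] Hk]; [left|right|by []]; exact: val_inj.
Qed.

Lemma mx2E (A : 'M[QT]_2) : A = mx2 (A 0 0) (A 0 1) (A 1 0) (A 1 1).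
Proof.
apply/matrixP => i j; rewrite !mxE.
by case: (ord2_cases i) => ->; case: (ord2_cases j) => ->.
Qed.

Lemma mx2_mul a b c d a' b' c' d' :
  mx2 a b c d *m mx2 a' b' c' d' =
  mx2 (a*a'+b*c') (a*b'+b*d') (c*a'+d*c') (c*b'+d*d').
Proof.
apply/matrixP => i j; rewrite !mxE !big_ord_recl big_ord0 addr0 !mxE.
by case: (ord2_cases i) => ->; case: (ord2_cases j) => ->.
Qed.

Lemma mx2_one : 1%:M = mx2 1 0 0 1 :> 'M[QT]_2.
Proof.
apply/matrixP => i j; rewrite !mxE.
by case: (ord2_cases i) => ->; case: (ord2_cases j) => ->.
Qed.

Lemma mx2_inj a b c d a' b' c' d' :
  mx2 a b c d = mx2 a' b' c' d' -> [/\ a = a', b = b', c = c' & d = d'].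
Proof.
move=> /matrixP H.
have := H 0 0; have := H 0 1; have := H 1 0; have := H 1 1.
by rewrite !mxE /= => -> -> -> ->.
Qed.

Lemma two_nz : (2%:R : QT) != 0.
Proof. by rewrite -(rmorph_nat (@tofrac _)) tofrac_eq0 -polyC_natr polyC_eq0. Qed.

Theorem theorem5p1 (T N : 'M[QT]_2) :
  VSB2_rep (mx2 0 tL 1 0) T N ->
  (exists a c : QT, laurent a /\ laurent c /\ T = mx2 a (c * tL) c a) /\
  ((exists p q : QT, [/\ laurent p, laurent q, q != 0,
                          laurent ((1 - p ^+ 2) / q) &
                          N = mx2 p q ((1 - p ^+ 2) / q) (- p)]) \/
      (exists r : QT, laurent r /\ N = mx2 (-1) 0 r 1) \/
      (exists r : QT, laurent r /\ N = mx2 1 0 r (-1)) \/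
      N = mx2 (-1) 0 0 (-1) \/
      N = mx2 1 0 0 1).
Proof.
case=> _ [LT _] [LN _] HST HN.
split.
  move: HST; rewrite [T]mx2E !mx2_mul => /mx2_inj [e1 e2 e3 e4].
  exists (T 0 0), (T 1 0); split; [exact: LT|split; [exact: LT|]].
  move: e3 e4; rewrite ?(mul0r, mulr0, mul1r, mulr1, addr0, add0r) => e3 e4.
  by rewrite -e3 e4.
move: HN; rewrite mx2_one [N]mx2E mx2_mul => /mx2_inj [e1 e2 e3 e4].
set p := N 0 0 in e1 e2 e3 e4 *; set q := N 0 1 in e1 e2 e3 e4 *.
set r := N 1 0 in e1 e2 e3 e4 *; set s := N 1 1 in e1 e2 e3 e4 *.
have Lr : laurent r by exact: LN.
have [q0|qn0] := eqVneq q 0.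
  rewrite q0 in e1 e2 e3 e4 *.
  move: e1 e4; rewrite ?(mul0r, mulr0, addr0, add0r) => e1 e4.
  have hp : (p - 1) * (p + 1) = 0 by rewrite -subr_sqr expr1n expr2 e1 subrr.
  have hs : (s - 1) * (s + 1) = 0 by rewrite -subr_sqr expr1n expr2 e4 subrr.
  have hps : r * (p + s) = 0 by rewrite mulrDr (mulrC r s).
  move: hp hs => /eqP; rewrite mulf_eq0 => /orP [] /eqP hp /eqP;
    rewrite mulf_eq0 => /orP [] /eqP hs.
  - have ep : p = 1 by apply/eqP; rewrite -subr_eq0 hp.
    have es : s = 1 by apply/eqP; rewrite -subr_eq0 hs.
    move: hps; rewrite ep es => /eqP; rewrite mulf_eq0 => /orP [/eqP r0|].
      by rewrite r0; do 4 right.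
    by rewrite (_ : 1 + 1 = 2%:R) // (negbTE two_nz).
  - have ep : p = 1 by apply/eqP; rewrite -subr_eq0 hp.
    have es : s = -1 by apply/eqP; rewrite -addr_eq0 hs.
    by right; right; left; exists r; rewrite ep es.
  - have ep : p = -1 by apply/eqP; rewrite -addr_eq0 hp.
    have es : s = 1 by apply/eqP; rewrite -subr_eq0 hs.
    by right; left; exists r; rewrite ep es.
  - have ep : p = -1 by apply/eqP; rewrite -addr_eq0 hp.
    have es : s = -1 by apply/eqP; rewrite -addr_eq0 hs.
    move: hps; rewrite ep es => /eqP; rewrite mulf_eq0 => /orP [/eqP r0|].
      by rewrite r0; do 3 right; left.
    by rewrite -opprD oppr_eq0 (_ : 1 + 1 = 2%:R) // (negbTE two_nz).
left.
have es : s = - p.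
  move: e2; rewrite (mulrC p q) -mulrDr => /eqP; rewrite mulf_eq0 (negbTE qn0) /= addrC.
  by rewrite addr_eq0 => /eqP.
have er : r = (1 - p ^+ 2) / q.
  by rewrite -e1 expr2 addrC addKr [q * r]mulrC mulfK.
exists p, q; split; [exact: LN|exact: LN|exact: qn0|by rewrite -er|].
by rewrite -er -es.
Qed.
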